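(* Let $G'$ and $G''$ be two bridgeless cubic graphs that are not 3-edge-colorable. If $G$ is a 2-junction of $G'$ and $G''$, then $\mu_3(G)=\mu_3(G')+\mu_3(G'')$.
   Context: Graphs may have multiple edges. A 1-factor is a spanning 1-regular subgraph. For a cubic graph $H$ and 1-factors $M_1,M_2,M_3$ of $H$, an edge is uncovered if it lies in none of $M_1,M_2,M_3$; $\mu_3(H)$ is the minimum number of uncovered edges over all lists (with possible repetition) of three 1-factors of $H$. A $\mu_3(H)$-core is the subgraph of $H$ induced by the edges lying in none or in at least two of $M_1,M_2,M_3$, for some $M_1,M_2,M_3$ with exactly $\mu_3(H)$ uncovered edges. A 2-junction of $G'$ and $G''$: let $e'=xy$ be an uncovered edge of a $\mu_3(G')$-core of $G'$ and $e''=uv$ an uncovered edge of a $\mu_3(G'')$-core of $G''$; the 2-junction is the graph $G$ with $V(G)=V(G')\cup V(G'')$ and $E(G)=(E(G')\cup E(G'')\cup\{ux,vy\})\setminus\{e',e''\}$. *)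

(* Defs.v *)
From HB Require Import structures.
From mathcomp Require Import all_boot.

Set Implicit Arguments.
Unset Strict Implicit.
Unset Printing Implicit Defensive.

(* A finite multigraph: each edge e has endpoints src e and dst e
   (multiple edges allowed; a loop would have src e = dst e). *)
Record mgraph := MGraph {
  vtx : finType;
  edg : finType;
  src : edg -> vtx;
  dst : edg -> vtx }.

Section GraphDefs.
Variable G : mgraph.

(* degree of v in the spanning subgraph with edge set F (loops count twice) *)
Definition degin (F : {set edg G}) (v : vtx G) : nat :=
  #|[set e in F | src e == v]| + #|[set e in F | dst e == v]|.

Definition cubic : Prop := forall v : vtx G, degin setT v = 3.

Definition one_factor (M : {set edg G}) : bool := [forall v, degin M v == 1].

Definition adj_without (e : edg G) : rel (vtx G) := fun x y =>
  [exists f : edg G, (f != e) &&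
     (((src f == x) && (dst f == y)) || ((src f == y) && (dst f == x)))].

Definition is_bridge (e : edg G) : bool :=
  ~~ connect (adj_without e) (src e) (dst e).

Definition bridgeless : Prop := forall e : edg G, ~~ is_bridge e.

Definition three_edge_colorable : Prop :=
  exists c : edg G -> 'I_3,
    forall (v : vtx G) (i : 'I_3), degin [set e | c e == i] v <= 1.

Definition uncovered (M1 M2 M3 : {set edg G}) : {set edg G} :=
  [set e | (e \notin M1) && (e \notin M2) && (e \notin M3)].

(* mu_3(G): minimum number of uncovered edges over triples of 1-factors
   (the default #|edg G| is an upper bound of every such count). *)
Definition mu3 : nat :=
  \big[minn/#|edg G|]_(t : {set edg G} * {set edg G} * {set edg G} |
      [&& one_factor t.1.1, one_factor t.1.2 & one_factor t.2])
    #|uncovered t.1.1 t.1.2 t.2|.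

Definition core_uncovered_edge (e : edg G) : Prop :=
  exists M1 M2 M3 : {set edg G},
    [/\ one_factor M1, one_factor M2, one_factor M3,
        #|uncovered M1 M2 M3| = mu3 & e \in uncovered M1 M2 M3].

End GraphDefs.

(* 2-junction of G1 and G2 along e1 = xy (x = src e1, y = dst e1) and
   e2 = uv (u = src e2, v = dst e2). New edges ux and vy; the flag b swaps
   the roles of x and y (giving uy and vx), covering both labelings. *)
Section Junction.
Variables (G1 G2 : mgraph) (e1 : edg G1) (e2 : edg G2) (b : bool).

Definition jV : finType := (vtx G1 + vtx G2)%type.
Definition jE : finType :=
  ({f : edg G1 | f != e1} + {f : edg G2 | f != e2} + bool)%type.

Definition jx : vtx G1 := if b then dst e1 else src e1.
Definition jy : vtx G1 := if b then src e1 else dst e1.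

Definition jsrc (f : jE) : jV :=
  match f with
  | inl (inl f1) => inl (src (val f1))
  | inl (inr f2) => inr (src (val f2))
  | inr false => inr (src e2)
  | inr true => inr (dst e2)
  end.

Definition jdst (f : jE) : jV :=
  match f with
  | inl (inl f1) => inl (dst (val f1))
  | inl (inr f2) => inr (dst (val f2))
  | inr false => inl jx          (* edge u x *)
  | inr true => inl jy           (* edge v y *)
  end.

Definition junction : mgraph := @MGraph jV jE jsrc jdst.
End Junction.

(* Main.v *)
Require Import Defs.
From mathcomp Require Import all_boot zify.
Set Implicit Arguments. Unset Strict Implicit.


Lemma degE (G : mgraph) (F : {set edg G}) v :
  degin F v = \sum_(e in F) ((src e == v) + (dst e == v)).
Proof.
rewrite /degin big_split /= -!big_mkcondr /= !sum1_card; congr (_ + _); apply: eq_card => e; by rewrite !inE.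
Qed.

Lemma sumsig (E : finType) (e1 : E) (h : E -> nat) :
  \sum_(f : E) h f = h e1 + \sum_(s : {f : E | f != e1}) h (val s).
Proof.
rewrite (bigD1 e1) //=; congr (_ + _).
rewrite (reindex_omap (val : {f : E | f != e1} -> E) insub); last first.
  by move=> i Hi; rewrite insubT.
by apply: eq_bigl=> -[i Hi]/=; rewrite insubT Hi /= eqxx.
Qed.

Lemma sum_eq1 (T : finType) (x : T) : \sum_(v : T) (x == v) = 1.
Proof.
by rewrite (bigD1 x) //= eqxx big1 // => v /negbTE; rewrite eq_sym => ->.
Qed.

Lemma handshake (I T : finType) (P : pred I) (s d : I -> T) :
  \sum_(v : T) \sum_(i | P i) ((s i == v) + (d i == v)) = (\sum_(i | P i) 1).*2.
Proof.
rewrite exchange_big /= -muln2 big_distrl /=; apply: eq_bigr => i _.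
by rewrite big_split /= !sum_eq1.
Qed.

Section J.
Variables (G1 G2 : mgraph) (e1 : edg G1) (e2 : edg G2) (b : bool).
Local Notation H := (junction e1 e2 b).

Definition cF (M : {set edg H}) := (inr false : edg H) \in M.
Definition cT (M : {set edg H}) := (inr true : edg H) \in M.

Definition R1 (M : {set edg H}) : {set edg G1} :=
  [set f | if (insub f : option {f : edg G1 | f != e1}) is Some s
           then (inl (inl s) : edg H) \in M else cF M].
Definition R2 (M : {set edg H}) : {set edg G2} :=
  [set f | if (insub f : option {f : edg G2 | f != e2}) is Some s
           then (inl (inr s) : edg H) \in M else cF M].

Lemma R1_val M s : (val s \in R1 M) = ((inl (inl s) : edg H) \in M).
Proof. by rewrite inE valK. Qed.
Lemma R1_e1 M : (e1 \in R1 M) = cF M.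
Proof. by rewrite inE insubF // eqxx. Qed.
Lemma R2_val M s : (val s \in R2 M) = ((inl (inr s) : edg H) \in M).
Proof. by rewrite inE valK. Qed.
Lemma R2_e2 M : (e2 \in R2 M) = cF M.
Proof. by rewrite inE insubF // eqxx. Qed.

Lemma degL M (w : vtx G1) : cF M = cT M ->
  degin M (inl w : vtx H) = degin (R1 M) w.
Proof.
move=> FT; rewrite !degE !(big_mkcond (fun e => e \in _)) (sumsig e1) big_sumType big_sumType /=.
rewrite R1_e1 big_bool /=.
rewrite [X in _ + X + _]big1 ?addn0; last by move=> i _; case: ifP.
rewrite addnC; congr (_ + _); last by apply: eq_bigr => s _; rewrite R1_val.
move: FT; rewrite /cF /cT => FT; rewrite -FT; case: (inr false \in M) => //.
by rewrite /jx /jy; case: b; rewrite /= addnC.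
Qed.

Lemma degR M (w : vtx G2) : cF M = cT M ->
  degin M (inr w : vtx H) = degin (R2 M) w.
Proof.
move=> FT; rewrite !degE !(big_mkcond (fun e => e \in _)) (sumsig e2) big_sumType big_sumType /=.
rewrite R2_e2 big_bool /=.
rewrite [X in X + _ + _]big1 ?add0n; last by move=> i _; case: ifP.
rewrite addnC; congr (_ + _); last by apply: eq_bigr => s _; rewrite R2_val.
move: FT; rewrite /cF /cT => FT; rewrite -FT; case: (inr false \in M) => //.
by rewrite /= !addn0 addnC.
Qed.

Lemma degLx M (w : vtx G1) :
  degin M (inl w : vtx H) =
  \sum_(i : {f : edg G1 | f != e1} | (inl (inl i) : edg H) \in M)
     ((src (val i) == w) + (dst (val i) == w))
  + ((cT M && (jy e1 b == w)) + (cF M && (jx e1 b == w))).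
Proof.
rewrite degE big_mkcond big_sumType big_sumType /= big_bool /=.
rewrite [X in _ + X + _]big1 ?addn0; last by move=> i _; case: ifP.
rewrite [in RHS]big_mkcond /cT /cF; congr (_ + (_ + _)).
  by case: ifP.
by case: ifP.
Qed.

Lemma sum_and (T : finType) (c : bool) (x : T) : \sum_(w : T) (c && (x == w)) = c.
Proof. by case: c; rewrite ?sum_eq1 // big1. Qed.

Lemma parity M : cubic G1 -> one_factor M -> cF M = cT M.
Proof.
move=> cub /forallP oneM.
have E1 : \sum_(w : vtx G1) degin M (inl w : vtx H) = #|vtx G1|.
  by rewrite -sum1_card; apply: eq_bigr => w _; apply/eqP/oneM.
have E2 : \sum_(w : vtx G1) \sum_(e in [set: edg G1]) ((src e == w) + (dst e == w)) = 3 * #|vtx G1|.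
  by rewrite -sum1_card big_distrr /=; apply: eq_bigr => w _; rewrite -degE cub muln1.
rewrite handshake in E2.
move: E1; under eq_bigr do rewrite degLx.
rewrite big_split /= handshake big_split /= !sum_and.
case: (cF M); case: (cT M) => //= E1; exfalso; move: E1 E2; set a := (X in X.*2 + _); set c := (X in X.*2 = _).
all: move=> E1 E2; clearbody a c; set n := #|vtx G1| in E1 E2; clearbody n; lia.
Qed.
Lemma oneH M : cF M = cT M ->
  one_factor M = one_factor (R1 M) && one_factor (R2 M).
Proof.
move=> FT; apply/idP/idP.
  move/forallP=> h; apply/andP; split; apply/forallP=> w.
    by rewrite -degL //; exact: (h (inl w)).
  by rewrite -degR //; exact: (h (inr w)).
case/andP=> /forallP h1 /forallP h2; apply/forallP=> -[w|w].
  by rewrite degL.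
by rewrite degR.
Qed.

Lemma cardS (T : finType) (A : {set T}) : #|A| = \sum_(e : T) (e \in A).
Proof. by rewrite -sum1_card big_mkcond /=; apply: eq_bigr => e _; case: (e \in A). Qed.

Lemma count_unc M1 M2 M3 : cF M1 = cT M1 -> cF M2 = cT M2 -> cF M3 = cT M3 ->
  #|uncovered M1 M2 M3| =
  #|uncovered (R1 M1) (R1 M2) (R1 M3)| + #|uncovered (R2 M1) (R2 M2) (R2 M3)|.
Proof.
move=> F1 F2 F3; rewrite !cardS big_sumType big_sumType big_bool (sumsig e1) (sumsig e2) /=.
have -> : \sum_(i : {f : edg G1 | f != e1}) ((inl (inl i) : edg H) \in uncovered M1 M2 M3)
  = \sum_(s : {f : edg G1 | f != e1}) (val s \in uncovered (R1 M1) (R1 M2) (R1 M3)).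
  apply: eq_bigr => s _; rewrite /uncovered !inE. by rewrite !valK.
have -> : \sum_(i : {f : edg G2 | f != e2}) ((inl (inr i) : edg H) \in uncovered M1 M2 M3)
  = \sum_(s : {f : edg G2 | f != e2}) (val s \in uncovered (R2 M1) (R2 M2) (R2 M3)).
  by apply: eq_bigr => s _; rewrite /uncovered !inE !valK.
have -> : ((inr true : edg H) \in uncovered M1 M2 M3) = (e1 \in uncovered (R1 M1) (R1 M2) (R1 M3)).
  rewrite /uncovered !inE insubF ?eqxx //. by rewrite F1 F2 F3.
have -> : ((inr false : edg H) \in uncovered M1 M2 M3) = (e2 \in uncovered (R2 M1) (R2 M2) (R2 M3)).
  by rewrite /uncovered !inE insubF ?eqxx.
by rewrite addnACA; congr (_ + _); apply: addnC.
Qed.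

Definition L (A1 : {set edg G1}) (A2 : {set edg G2}) : {set edg H} :=
  [set e : edg H | match e with
                   | inl (inl s) => val s \in A1
                   | inl (inr s) => val s \in A2
                   | inr _ => false end].

Lemma cFL (A1 : {set edg G1}) (A2 : {set edg G2}) : cF (L A1 A2) = false. Proof. by rewrite /cF inE. Qed.
Lemma cTL (A1 : {set edg G1}) (A2 : {set edg G2}) : cT (L A1 A2) = false. Proof. by rewrite /cT inE. Qed.

Lemma R1L (A1 : {set edg G1}) (A2 : {set edg G2}) : e1 \notin A1 -> R1 (L A1 A2) = A1.
Proof.
move=> nA; apply/setP=> f; rewrite inE; case: insubP => [s _ <-|].
  by rewrite inE.
by move/negPn/eqP->; rewrite cFL; apply/esym/negbTE.
Qed.
Lemma R2L (A1 : {set edg G1}) (A2 : {set edg G2}) : e2 \notin A2 -> R2 (L A1 A2) = A2.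
Proof.
move=> nA; apply/setP=> f; rewrite inE; case: insubP => [s _ <-|].
  by rewrite inE.
by move/negPn/eqP->; rewrite cFL; apply/esym/negbTE.
Qed.
End J.

Lemma bigmin_le (I : finType) (P : pred I) (F : I -> nat) x j :
  P j -> \big[minn/x]_(i | P i) F i <= F j.
Proof.
move=> Pj; rewrite -big_filter.
have : j \in filter P (index_enum I) by rewrite mem_filter Pj mem_index_enum.
elim: (filter P (index_enum I)) => [//|a s IH]; rewrite inE big_cons => /orP[/eqP->|js].
  exact: geq_minl.
exact: leq_trans (geq_minr _ _) (IH js).
Qed.

Lemma mu3_le (G : mgraph) (M1 M2 M3 : {set edg G}) :
  one_factor M1 -> one_factor M2 -> one_factor M3 ->
  mu3 G <= #|uncovered M1 M2 M3|.
Proof.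
move=> h1 h2 h3; rewrite /mu3; apply: (@bigmin_le _ _ _ _ (M1, M2, M3)) => /=.
by rewrite h1 h2 h3.
Qed.

Lemma mu3_ge (G : mgraph) n :
  (forall M1 M2 M3 : {set edg G}, one_factor M1 -> one_factor M2 -> one_factor M3 ->
     n <= #|uncovered M1 M2 M3|) -> n <= #|edg G| -> n <= mu3 G.
Proof.
move=> h hc; rewrite /mu3; apply: (big_ind (fun x => n <= x)) => //.
  by move=> x y hx hy; rewrite leq_min hx hy.
by move=> [[M1 M2] M3] /and3P[h1 h2 h3]; apply: h.
Qed.

Theorem mainTheorem7 (G1 G2 : mgraph) :
  cubic G1 -> cubic G2 -> bridgeless G1 -> bridgeless G2 ->
  ~ three_edge_colorable G1 -> ~ three_edge_colorable G2 ->
  forall (e1 : edg G1) (e2 : edg G2),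
    core_uncovered_edge e1 -> core_uncovered_edge e2 ->
    forall b : bool,
      mu3 (junction e1 e2 b) = mu3 G1 + mu3 G2.
Proof.
move=> cub1 _ _ _ _ _ e1 e2 [A1 [A2 [A3 [a1 a2 a3 ca ea]]]] [B1 [B2 [B3 [b1 b2 b3 cb eb]]]] b.
move: ea eb; rewrite /uncovered !inE => /andP[/andP[n1 n2] n3] /andP[/andP[m1 m2] m3].
have oneL : forall (A : {set edg G1}) (B : {set edg G2}), e1 \notin A -> e2 \notin B ->
    one_factor A -> one_factor B -> one_factor (L e1 e2 b A B).
  move=> A B nA nB oA oB; rewrite oneH; last by rewrite cFL cTL.
  by rewrite R1L // R2L // oA oB.
have cnt : #|uncovered (L e1 e2 b A1 B1) (L e1 e2 b A2 B2) (L e1 e2 b A3 B3)| = mu3 G1 + mu3 G2.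
  by rewrite count_unc ?cFL ?cTL // !R1L // !R2L // ca cb.
apply/eqP; rewrite eqn_leq; apply/andP; split.
  by rewrite -cnt; apply: mu3_le; apply: oneL.
apply: mu3_ge; last by rewrite -cnt max_card.
move=> M1 M2 M3 h1 h2 h3.
have p1 := parity cub1 h1; have p2 := parity cub1 h2; have p3 := parity cub1 h3.
rewrite count_unc //; apply: leq_add; apply: mu3_le.
all: by [move: h1; rewrite oneH // => /andP[] | move: h2; rewrite oneH // => /andP[] | move: h3; rewrite oneH // => /andP[]].
Qed.
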